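(* Let $X$ be a finite set with $d=|X|\ge2$ and let $U$ be a clopen subset of $X^\omega$. If $U=\bigsqcup_{i=1}^n v_iX^\omega$ with $v_i\in X^*$, then the residue of $n$ modulo $d-1$ does not depend on the decomposition; denote it $m(U)\in\mathbb{Z}/(d-1)\mathbb{Z}$. For non-empty proper clopen subsets $U_1,U_2\subset X^\omega$ the following are equivalent: (1) $U_1,U_2$ lie in one $\mathcal{V}_X$-orbit; (2) $U_1,U_2$ lie in one $\mathcal{V}_X'$-orbit; (3) $m(U_1)=m(U_2)$.
   Context: $X^*$ is the set of finite words over $X$, $X^\omega$ the space of right-infinite sequences with the product topology, $vX^\omega$ the set of sequences beginning with $v$. A complete antichain is a finite set $A\subset X^*$ of words, none a prefix of another, with $X^\omega=\bigsqcup_{v\in A}vX^\omega$. The Higman–Thompson group $\mathcal{V}_X$ is the group of homeomorphisms $g$ of $X^\omega$ for which there are complete antichains $A_1,A_2$ and a bijection $\alpha:A_1\to A_2$ with $g(vw)=\alpha(v)w$ for all $v\in A_1$, $w\in X^\omega$. $\mathcal{V}_X'$ is its commutator subgroup. *)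

(* Defs.v *)
From mathcomp Require Import all_boot.
Set Implicit Arguments. Unset Strict Implicit. Unset Printing Implicit Defensive.

Section Cantor.
Variable X : finType.

Definition pt := nat -> X.
Definition subset_pt := pt -> Prop.

Definition cyl (v : seq X) (x : pt) : Prop := mkseq x (size v) = v.

Definition cat_inf (v : seq X) (w : pt) : pt :=
  fun n => if n < size v then nth (w 0) v n else w (n - size v).

(* product topology on X^omega *)
Definition is_open (U : subset_pt) : Prop :=
  forall x, U x -> exists n, forall y, mkseq y n = mkseq x n -> U y.
Definition is_clopen (U : subset_pt) : Prop :=
  is_open U /\ is_open (fun x => ~ U x).

Definition continuous (g : pt -> pt) : Prop :=
  forall x n, exists m, forall y, mkseq y m = mkseq x m ->
    mkseq (g y) n = mkseq (g x) n.

Definition homeo (g : pt -> pt) : Prop :=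
  continuous g /\ exists h : pt -> pt, continuous h /\
    (forall x, h (g x) = x) /\ (forall x, g (h x) = x).

(* U = disjoint union of the cylinders v_i X^omega, v_i the entries of vs
   (n = size vs) *)
Definition decomp (U : subset_pt) (vs : seq (seq X)) : Prop :=
  (forall x, U x <-> exists2 v, v \in vs & cyl v x) /\
  (forall i j, i < j < size vs -> forall x,
      ~ (cyl (nth [::] vs i) x /\ cyl (nth [::] vs j) x)).

Definition complete_antichain (A : seq (seq X)) : Prop :=
  uniq A /\
  (forall u v, u \in A -> v \in A -> u != v -> ~~ prefix u v) /\
  (forall x, exists2 v, v \in A & cyl v x).

(* Higman--Thompson group V_X; the bijection alpha : A1 -> A2 sends the
   i-th entry of A1 to the i-th entry of A2 *)
Definition inV (g : pt -> pt) : Prop :=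
  homeo g /\ exists A1 A2 : seq (seq X),
    [/\ complete_antichain A1, complete_antichain A2, size A1 = size A2 &
        forall i, i < size A1 -> forall w : pt,
          g (cat_inf (nth [::] A1 i) w) = cat_inf (nth [::] A2 i) w].

(* commutator subgroup V_X' : finite products of commutators
   [a,b] = a^-1 b^-1 a b with a, b in V_X (this set is the subgroup
   generated by commutators since [a,b]^-1 = [b,a]) *)
Inductive inVcomm : (pt -> pt) -> Prop :=
| inVcomm_id : inVcomm (fun x => x)
| inVcomm_mul : forall g a a' b b',
    inVcomm g -> inV a -> inV b ->
    (forall x, a' (a x) = x) -> (forall x, a (a' x) = x) ->
    (forall x, b' (b x) = x) -> (forall x, b (b' x) = x) ->
    inVcomm (fun x => g (a' (b' (a (b x))))).

Definition same_orbit (G : (pt -> pt) -> Prop) (U1 U2 : subset_pt) : Prop :=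
  exists g, G g /\ forall y, U2 y <-> exists2 x, U1 x & g x = y.

Definition nonempty_proper (U : subset_pt) : Prop :=
  (exists x, U x) /\ (exists x, ~ U x).

End Cantor.

(* Main.v *)
Require Import Defs.
From mathcomp Require Import all_boot.
From Stdlib Require Import FunctionalExtensionality ClassicalEpsilon Classical.
Set Implicit Arguments. Unset Strict Implicit. Unset Printing Implicit Defensive.


Section Basics.
Variable X : finType.
Local Notation pt := (pt X).
Local Notation cyl := (@cyl X).
Local Notation cat_inf := (@cat_inf X).

Definition sh (n : nat) (x : pt) : pt := fun m => x (n + m).

Lemma mkseq_cat_inf (u : seq X) (w : pt) n : n <= size u ->
  mkseq (cat_inf u w) n = take n u.
Proof.
move=> hn; apply: (@eq_from_nth _ (w 0)).
  by rewrite size_mkseq size_take_min; apply/esym/minn_idPl.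
move=> i; rewrite size_mkseq => hi.
rewrite nth_mkseq // nth_take // /Defs.cat_inf.
by rewrite (leq_trans hi hn).
Qed.

Lemma cyl_cat_inf v u w : size v <= size u -> cyl v (cat_inf u w) <-> prefix v u.
Proof.
move=> h; rewrite /Defs.cyl mkseq_cat_inf // prefixE; split; first by move=>->.
by move/eqP.
Qed.

Lemma cyl_cat_inf_pre v u w : prefix v u -> cyl v (cat_inf u w).
Proof.
move=> h; apply/cyl_cat_inf => //.
by move: h; rewrite prefixE => /eqP <-; rewrite size_take_min geq_minr.
Qed.

Lemma cyl_self u w : cyl u (cat_inf u w).
Proof. by apply: cyl_cat_inf_pre; rewrite prefixE take_size. Qed.

Lemma cat_inf_mkseq (x : pt) n : cat_inf (mkseq x n) (sh n x) = x.
Proof.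
apply: functional_extensionality => m; rewrite /Defs.cat_inf size_mkseq /sh.
case: ltnP => h; first by rewrite nth_mkseq.
by rewrite subnKC.
Qed.

Lemma cyl_decomp v x : cyl v x -> x = cat_inf v (sh (size v) x).
Proof. by rewrite /Defs.cyl => h; rewrite -{1}h cat_inf_mkseq. Qed.

Lemma cat_inf_cat s t w : cat_inf (s ++ t) w = cat_inf s (cat_inf t w).
Proof.
apply: functional_extensionality => m; rewrite /Defs.cat_inf size_cat.
case: (ltnP m (size s)) => h1.
  by rewrite (ltn_addr _ h1) nth_cat h1; apply: set_nth_default.
rewrite /=.
case: (ltnP m (size s + size t)) => h2.
  by rewrite nth_cat ltnNge h1 /= ltn_subLR // h2; apply: set_nth_default; rewrite ltn_subLR.
by rewrite ltnNge leq_subRL // h2 /= subnDA.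
Qed.

Lemma cat_inf_nil w : cat_inf [::] w = w.
Proof. by apply: functional_extensionality => m; rewrite /Defs.cat_inf /= subn0. Qed.

Lemma sh_cat_inf u w : sh (size u) (cat_inf u w) = w.
Proof.
apply: functional_extensionality => m; rewrite /sh /Defs.cat_inf.
by rewrite ltnNge leq_addr /= addKn.
Qed.

Lemma cat_inf_inj u u' w w' : size u = size u' -> cat_inf u w = cat_inf u' w' ->
  u = u' /\ w = w'.
Proof.
move=> hs he.
have hu : u = u'.
  have := cyl_self u w; rewrite he => /cyl_cat_inf; rewrite hs => /(_ (leqnn _)).
  by rewrite prefixE hs take_size => /eqP.
split=> //; have := sh_cat_inf u w; rewrite he hs sh_cat_inf //.
Qed.

Lemma cyl_nth v x i d : cyl v x -> i < size v -> x i = nth d v i.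
Proof. by rewrite /Defs.cyl => <-; rewrite size_mkseq => h; rewrite nth_mkseq. Qed.

Lemma cyl_prefix v u x : cyl v x -> cyl u x -> size v <= size u -> prefix v u.
Proof.
move=> hv hu hs; rewrite (cyl_decomp hu) in hv.
by move/cyl_cat_inf: hv => /(_ hs).
Qed.

Lemma cyl_ext v u x : prefix v u -> cyl u x -> cyl v x.
Proof.
move=> hp hu; rewrite (cyl_decomp hu); exact: cyl_cat_inf_pre.
Qed.

End Basics.


Section Words.
Variable X : finType.

Fixpoint W (n : nat) : seq (seq X) :=
  if n is n'.+1 then [seq x :: w | x <- enum X, w <- W n'] else [:: [::]].

Lemma mem_W u n : (u \in W n) = (size u == n).
Proof.
elim: n u => [|n IH] u /=; first by case: u.
apply/allpairsP/idP => [[[x w] [_ /= hw ->]]|].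
  by move: hw; rewrite IH /= eqSS.
case: u => [|x w] //=; rewrite eqSS => h.
by exists (x, w); rewrite /= mem_enum IH.
Qed.

Lemma uniq_W n : uniq (W n).
Proof.
elim: n => [|n IH] //=; apply: allpairs_uniq => //; first exact: enum_uniq.
by move=> [x w] [x' w'] _ _ /= [-> ->].
Qed.

Lemma size_W n : size (W n) = #|X| ^ n.
Proof.
elim: n => [|n IH] //=; by rewrite size_allpairs IH cardE expnS.
Qed.

Lemma count_prefix_allpairs (a : X) v (s : seq X) (t : seq (seq X)) :
  count (prefix (a :: v)) [seq x :: w | x <- s, w <- t] =
  count (pred1 a) s * count (prefix v) t.
Proof.
elim: s => [|x s IH]; first by []. rewrite allpairs_cons count_cat IH count_map mulnDl.
congr (_ + _); rewrite /=.
case: eqP => [->|h]; first by rewrite mul1n; apply: eq_count => w /=; rewrite eqxx.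
rewrite mul0n; apply/eqP; rewrite eqn0Ngt -has_count; apply/hasPn => w _ /=.
by case: eqP => // /esym.
Qed.

Lemma count_prefix_W v n : size v <= n -> count (prefix v) (W n) = #|X| ^ (n - size v).
Proof.
elim: n v => [|n IH] v.
  by case: v.
case: v => [|a v] /=.
  move=> _; rewrite subn0 -size_W; apply/eqP; rewrite -all_count; apply/allP => w _.
  by case: w.
rewrite ltnS => h; rewrite count_prefix_allpairs IH // subSS.
by rewrite count_uniq_mem ?enum_uniq // mem_enum mul1n.
Qed.

End Words.


Section Count.
Variable X : finType.
Variable x0 : X.
Local Notation w0 := (fun _ : nat => x0).

Definition disjl (vs : seq (seq X)) :=
  forall i j, i < j < size vs -> forall x,
      ~ (cyl (nth [::] vs i) x /\ cyl (nth [::] vs j) x).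

Lemma count_disj vs N : disjl vs -> (forall v, v \in vs -> size v <= N) ->
  count (fun u => has (fun v => prefix v u) vs) (W X N) = sumn [seq #|X| ^ (N - size v) | v <- vs].
Proof.
elim: vs => [|v vs IH] hd hs /=.
  by apply/eqP; rewrite eqn0Ngt -has_count; apply/hasPn => u _ /=.
have hd' : disjl vs.
  by move=> i j /andP [hij hj] x; apply: (hd i.+1 j.+1); rewrite /= !ltnS hij.
rewrite -IH //; last by move=> w hw; apply: hs; rewrite in_cons hw orbT.
rewrite -(count_prefix_W (hs v (mem_head _ _))).
have := count_predUI (prefix v) (fun u => has (fun v => prefix v u) vs) (W X N).
have -> : count (predI (prefix v) (fun u => has (fun v => prefix v u) vs)) (W X N) = 0.
  apply/eqP; rewrite eqn0Ngt -has_count; apply/hasPn => u hu /=.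
  apply/negP => /andP [hp /hasP [v' hv' hp']].
  move: hv' => /(nthP [::]) [j hj hj'].
  apply: (hd 0 j.+1 _ (cat_inf u w0)); first by rewrite /= ltnS hj.
  by rewrite /= hj'; split; apply: cyl_cat_inf_pre.
by rewrite addn0 => <-.
Qed.

Lemma expn_mod_pred k : #|X| ^ k = 1 %[mod #|X|.-1].
Proof.
have hX : 0 < #|X| by apply/card_gt0P; exists x0.
rewrite -{1}(prednK hX) -addn1 -{1}(mul1n #|X|.-1) modnMDXl exp1n //.
Qed.

Lemma sumn_mod (vs : seq (seq X)) N :
  sumn [seq #|X| ^ (N - size v) | v <- vs] = size vs %[mod #|X|.-1].
Proof.
elim: vs => [|v vs IH] //=.
by rewrite -modnDm IH expn_mod_pred modnDm add1n.
Qed.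

Lemma size_le_sumn (vs : seq (seq X)) v : v \in vs -> size v <= sumn (map size vs).
Proof.
elim: vs => [|w vs IH] //=; rewrite in_cons => /orP [/eqP ->|h].
  exact: leq_addr.
by apply: leq_trans (IH h) (leq_addl _ _).
Qed.

Lemma decomp_has (U : subset_pt X) vs u : decomp U vs -> (forall v, v \in vs -> size v <= size u) ->
  has (fun v => prefix v u) vs <-> U (cat_inf u w0).
Proof.
move=> [hU _] hs; split.
  by move=> /hasP [v hv hp]; apply/hU; exists v => //; apply: cyl_cat_inf_pre.
move=> /hU [v hv hc]; apply/hasP; exists v => //.
by move: hc => /cyl_cat_inf; apply; apply: hs.
Qed.

Lemma decomp_mod (U : subset_pt X) vs1 vs2 : decomp U vs1 -> decomp U vs2 ->
  size vs1 = size vs2 %[mod #|X|.-1].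
Proof.
move=> h1 h2.
set N := sumn (map size (vs1 ++ vs2)).
have hs1 : forall v, v \in vs1 -> size v <= N.
  by move=> v hv; apply: size_le_sumn; rewrite mem_cat hv.
have hs2 : forall v, v \in vs2 -> size v <= N.
  by move=> v hv; apply: size_le_sumn; rewrite mem_cat hv orbT.
rewrite -(sumn_mod vs1 N) -(sumn_mod vs2 N).
rewrite -(count_disj h1.2 hs1) -(count_disj h2.2 hs2).
congr (_ %% _); apply: eq_in_count => u; rewrite mem_W => /eqP hu.
have E1 := @decomp_has U vs1 u h1.
have E2 := @decomp_has U vs2 u h2.
rewrite hu in E1 E2.
have {E1}E1 := E1 hs1. have {E2}E2 := E2 hs2.
by apply/idP/idP => h; [apply/E2/E1|apply/E1/E2].
Qed.

End Count.


Section Compact.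
Variable X : finType.
Implicit Types (U : subset_pt X) (u v s : seq X).

Definition decided U u :=
  (forall w, U (cat_inf u w)) \/ (forall w, ~ U (cat_inf u w)).

Lemma decided_ext U u s : decided U u -> decided U (u ++ s).
Proof.
by case=> h; [left|right] => w; rewrite cat_inf_cat; apply: h.
Qed.

Lemma uniform U : is_clopen U -> exists N, forall u, size u = N -> decided U u.
Proof.
move=> [hO hC]; apply: NNPP => H.
pose bad u := forall n, exists s, size s = n /\ ~ decided U (u ++ s).
have b0 : bad [::].
  move=> n; apply: NNPP => hn; apply: H; exists n => u hu; apply: NNPP => hd.
  by apply: hn; exists u.
have step : forall u, bad u -> exists x, bad (rcons u x).
  move=> u hb; apply: NNPP => hn.
  have h1 : forall x, exists n, forall s, size s = n -> decided U (rcons u x ++ s).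
    move=> x; apply: NNPP => hx; apply: hn; exists x => n.
    apply: NNPP => hy; apply: hx; exists n => s hs; apply: NNPP => hd.
    by apply: hy; exists s.
  pose nf x := proj1_sig (constructive_indefinite_description _ (h1 x)).
  have hnf x : forall s, size s = nf x -> decided U (rcons u x ++ s).
    exact: (proj2_sig (constructive_indefinite_description _ (h1 x))).
  pose M := \max_(x : X) nf x.
  have [s [hs hd]] := hb M.+1.
  case: s hs hd => [|x s'] //= [hs'] hd; apply: hd.
  rewrite -cat_rcons -(cat_take_drop (nf x) s') catA; apply: decided_ext.
  apply: hnf; rewrite size_take_min hs'; apply/minn_idPl.
  exact: (leq_bigmax x).
have step' : forall u, exists x, bad u -> bad (rcons u x).
  move=> u; case: (classic (bad u)) => hb.
    by have [x hx] := step u hb; exists x.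
  have [s [hs _]] := b0 1.
  by case: s hs => [|x s] // _; exists x.
pose f u := proj1_sig (constructive_indefinite_description _ (step' u)).
have hf u : bad u -> bad (rcons u (f u)).
  exact: (proj2_sig (constructive_indefinite_description _ (step' u))).
pose fix pre n := if n is n'.+1 then rcons (pre n') (f (pre n')) else [::].
pose x n := f (pre n).
have hpre n : mkseq x n = pre n.
  by elim: n => [|n IH] //; rewrite mkseqS IH.
have hbad n : bad (pre n).
  by elim: n => [|n IH] //=; apply: hf.
have hdec n : (forall y, mkseq y n = mkseq x n -> U y) \/
              (forall y, mkseq y n = mkseq x n -> ~ U y) -> False.
  move=> hd; have [s [hs hs']] := hbad n 0.
  case: s hs hs' => // _; rewrite cats0; apply.
  have hsz : size (pre n) = n by rewrite -hpre size_mkseq.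
  case: hd => hd; [left|right] => w; apply: hd;
    by rewrite mkseq_cat_inf ?hsz // -{1}hsz take_size hpre.
case: (classic (U x)) => hx.
  have [n hn] := hO x hx; exact: (hdec n (or_introl hn)).
have [n hn] := hC x hx; exact: (hdec n (or_intror hn)).
Qed.

Lemma uniform_ge U N : (forall u, size u = N -> decided U u) ->
  forall N' u, N <= N' -> size u = N' -> decided U u.
Proof.
move=> h N' u hN hu; rewrite -(cat_take_drop N u); apply: decided_ext; apply: h.
by rewrite size_take_min hu; apply/minn_idPl.
Qed.

Definition asb (P : Prop) : bool := if excluded_middle_informative P then true else false.
Lemma asbP P : asb P <-> P.
Proof. by rewrite /asb; case: excluded_middle_informative. Qed.

Variable x0 : X.
Local Notation w0 := (fun _ : nat => x0).

Definition lvl U N := [seq u <- W X N | asb (U (cat_inf u w0))].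

Lemma lvl_decomp U N : (forall u, size u = N -> decided U u) -> decomp U (lvl U N).
Proof.
move=> hd; split.
  move=> x; split.
    move=> hx; exists (mkseq x N); last by rewrite /Defs.cyl size_mkseq.
    rewrite mem_filter mem_W size_mkseq eqxx andbT; apply/asbP.
    case: (hd (mkseq x N) (size_mkseq _ _)) => h; first exact: h.
    by exfalso; apply: (h (sh N x)); rewrite cat_inf_mkseq.
  move=> [v]; rewrite mem_filter mem_W => /andP [/asbP hv /eqP hs] hc.
  rewrite (cyl_decomp hc).
  case: (hd v hs) => h; first exact: h.
  by exfalso; apply: (h w0).
move=> i j /andP [hij hj] x [hi' hj'].
have hi : i < size (lvl U N) by apply: ltn_trans hj.
have hu : uniq (lvl U N) by apply: filter_uniq; apply: uniq_W.
have : nth [::] (lvl U N) i == nth [::] (lvl U N) j.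
  have sz k : k < size (lvl U N) -> size (nth [::] (lvl U N) k) = N.
    move=> hk; have := mem_nth [::] hk; rewrite mem_filter mem_W.
    by case/andP => _ /eqP.
  move: hi' hj'; rewrite /Defs.cyl (sz _ hi) (sz _ hj) => <- <-; exact: eqxx.
by rewrite nth_uniq // (ltn_eqF hij).
Qed.

End Compact.


Section Group.
Variable X : finType.
Variable x0 : X.
Local Notation w0 := (fun _ : nat => x0).
Local Notation pt := (pt X).
Implicit Types (g h : pt -> pt) (u v s : seq X).

Definition lvat g N (f : seq X -> seq X) :=
  forall u, size u = N -> forall w, g (cat_inf u w) = cat_inf (f u) w.
Definition LV g := exists N f, lvat g N f.

Lemma lvat_ge g N f N' : lvat g N f -> N <= N' ->
  lvat g N' (fun u => f (take N u) ++ drop N u).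
Proof.
move=> h hN u hu w.
rewrite -{1}(cat_take_drop N u) !cat_inf_cat h //.
by rewrite size_take_min hu; apply/minn_idPl.
Qed.

Lemma LV_id : LV (fun x => x).
Proof. by exists 0, id => u _ w. Qed.

Lemma LV_comp g h : LV g -> LV h -> LV (fun x => g (h x)).
Proof.
move=> [M [fg hg]] [N [fh hh]].
have hh' := lvat_ge hh (leq_addr M N).
exists (N + M), (fun u => let s := fh (take N u) ++ drop N u in
                          fg (take M s) ++ drop M s).
move=> u hu w; rewrite hh' //= -{1}(cat_take_drop M (fh (take N u) ++ drop N u)).
rewrite !cat_inf_cat hg // size_take_min size_cat size_drop hu addKn.
by apply/minn_idPl; apply: leq_addl.
Qed.

Lemma mkseq_lt (x y : pt) m : mkseq y m = mkseq x m -> forall i, i < m -> y i = x i.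
Proof.
move=> h i hi; have := congr1 (fun s => nth x0 s i) h; by rewrite /= !nth_mkseq.
Qed.

Lemma mkseq_eq (x y : pt) m : (forall i, i < m -> y i = x i) -> mkseq y m = mkseq x m.
Proof.
by move=> h; rewrite /mkseq; apply/eq_in_map => i; rewrite mem_iota add0n => /andP [_ /h].
Qed.

Lemma LV_cont g : LV g -> continuous g.
Proof.
move=> [N [f hf]] x n; exists (N + n) => y hy.
have hl := mkseq_lt hy.
have hxy : mkseq y N = mkseq x N.
  by apply: mkseq_eq => i hi; apply: hl; apply: leq_trans hi (leq_addr _ _).
rewrite -(cat_inf_mkseq y N) -(cat_inf_mkseq x N) !hf ?size_mkseq // hxy.
apply: mkseq_eq => i hi; rewrite /Defs.cat_inf; case: ltnP => // hi'.
  exact: set_nth_default.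
rewrite /sh; apply: hl; rewrite ltn_add2l; apply: leq_ltn_trans (leq_subr _ _) hi.
Qed.

Lemma antichain_LV g A1 A2 : complete_antichain A1 -> size A1 <= size A2 ->
  (forall i, i < size A1 -> forall w, g (cat_inf (nth [::] A1 i) w) = cat_inf (nth [::] A2 i) w) ->
  LV g.
Proof.
move=> [_ [_ hc]] hs hg.
exists (sumn (map size A1)).
pose i u := find (fun v => prefix v u) A1.
exists (fun u => nth [::] A2 (i u) ++ drop (size (nth [::] A1 (i u))) u).
move=> u hu w.
have hh : has (fun v => prefix v u) A1.
  have [v hv hcv] := hc (cat_inf u w); apply/hasP; exists v => //.
  move/cyl_cat_inf: hcv; apply; rewrite hu; exact: size_le_sumn.
have hi : i u < size A1 by rewrite -has_find.
have hp : take (size (nth [::] A1 (i u))) u = nth [::] A1 (i u).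
  by apply/eqP; rewrite -prefixE; apply: (nth_find [::] hh).
by rewrite -{1}(cat_take_drop (size (nth [::] A1 (i u))) u) hp cat_inf_cat hg // cat_inf_cat.
Qed.

Lemma W_antichain N : complete_antichain (W X N).
Proof.
split; first exact: uniq_W.
split.
  move=> u v; rewrite !mem_W => /eqP hu /eqP hv huv; apply/negP.
  rewrite prefixE hu -hv take_size => /eqP h; by rewrite h eqxx in huv.
move=> x; exists (mkseq x N); first by rewrite mem_W size_mkseq.
by rewrite /Defs.cyl size_mkseq.
Qed.

Lemma LV_inV g h : (forall x, h (g x) = x) -> (forall x, g (h x) = x) ->
  LV g -> LV h -> inV g.
Proof.
move=> hgh hhg hg hh; split.
  split; first exact: LV_cont.
  by exists h; split; first exact: LV_cont.
have ginj : forall x y, g x = g y -> x = y.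
  by move=> x y e; rewrite -(hgh x) e hgh.
have [N [f hf]] := hg.
exists (W X N), (map f (W X N)); split.
- exact: W_antichain.
- have finj : {in W X N &, injective f}.
    move=> u v; rewrite !mem_W => /eqP hu /eqP hv e.
    have := ginj (cat_inf u w0) (cat_inf v w0).
    rewrite !hf // e => /(_ erefl) /cat_inf_inj.
    by rewrite hu hv => /(_ erefl) [].
  split; first by rewrite map_inj_in_uniq //; exact: uniq_W.
  split.
    move=> a b /mapP [u hu ->] /mapP [v hv ->] hne; apply/negP.
    rewrite prefixE => /eqP hp.
    have su : size u = N by move: hu; rewrite mem_W => /eqP.
    have sv : size v = N by move: hv; rewrite mem_W => /eqP.
    have e : g (cat_inf v w0) = g (cat_inf u (cat_inf (drop (size (f u)) (f v)) w0)).
      by rewrite hf // hf // -cat_inf_cat -{1}hp cat_take_drop.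
    move: (ginj _ _ e) => /cat_inf_inj.
    rewrite su sv => /(_ erefl) [huv _].
    by rewrite huv eqxx in hne.
  move=> y; exists (f (mkseq (h y) N)); first by apply: map_f; rewrite mem_W size_mkseq.
  have ey : y = g (cat_inf (mkseq (h y) N) (sh N (h y))) by rewrite cat_inf_mkseq hhg.
  rewrite {2}ey hf ?size_mkseq //; exact: cyl_self.
- by rewrite size_map.
- move=> i hi w; rewrite (nth_map [::]) // hf //.
  by have := mem_nth [::] hi; rewrite mem_W => /eqP.
Qed.

Lemma inV_LV g : inV g -> exists h, [/\ (forall x, h (g x) = x), (forall x, g (h x) = x),
  LV g & LV h].
Proof.
move=> [[_ [h [_ [hgh hhg]]]] [A1 [A2 [hA1 hA2 hs hg]]]].
exists h; split => //.
  by apply: (antichain_LV hA1 _ hg); rewrite hs.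
apply: (antichain_LV (A2 := A1) hA2); first by rewrite hs.
by move=> i hi w; rewrite -(hgh (cat_inf (nth [::] A1 i) w)) hg // hs.
Qed.

Definition good g := exists h, [/\ (forall x, h (g x) = x), (forall x, g (h x) = x),
  LV g & LV h].

Lemma good_inv g a' : good g -> (forall x, a' (g x) = x) -> (forall x, g (a' x) = x) ->
  good a'.
Proof.
move=> [h [h1 h2 h3 h4]] a1 a2.
have ea : a' = h.
  by apply: functional_extensionality => x; rewrite -{1}(h2 x) a1.
by exists g; rewrite ea; split.
Qed.

Lemma good_comp g1 g2 : good g1 -> good g2 -> good (fun x => g1 (g2 x)).
Proof.
move=> [h1 [a1 b1 c1 d1]] [h2 [a2 b2 c2 d2]].
exists (fun x => h2 (h1 x)); split.
- by move=> x; rewrite a1 a2.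
- by move=> x; rewrite b2 b1.
- exact: LV_comp.
- exact: LV_comp.
Qed.

Lemma inVcomm_good g : inVcomm g -> good g.
Proof.
elim=> [|g0 a a' b b' _ IH ha hb a1 a2 b1 b2].
  by exists (fun x => x); split => //; exact: LV_id.
have [ga gb] : good a /\ good b.
  by split; [have := inV_LV ha|have := inV_LV hb].
have ga' := good_inv ga a1 a2.
have gb' := good_inv gb b1 b2.
apply: good_comp => //; apply: good_comp => //; apply: good_comp => //.
exact: good_comp.
Qed.

Lemma inVcomm_inV g : inVcomm g -> inV g.
Proof.
by move/inVcomm_good => [h [h1 h2 h3 h4]]; apply: (LV_inV h1 h2).
Qed.

End Group.


Section OneThree.
Variable X : finType.
Variable x0 : X.
Local Notation pt := (pt X).

Lemma lvl_size (U : subset_pt X) N u : u \in lvl x0 U N -> size u = N.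
Proof. by rewrite mem_filter mem_W => /andP [_ /eqP]. Qed.

Lemma one_three (U1 U2 : subset_pt X) vs1 vs2 :
  is_clopen U1 -> decomp U1 vs1 -> decomp U2 vs2 ->
  same_orbit (@inV X) U1 U2 -> size vs1 = size vs2 %[mod #|X|.-1].
Proof.
move=> hc1 hd1 hd2 [g [hg horb]].
have [h [hgh hhg [Ng [f hf]] _]] := inV_LV hg.
have ginj : forall x y, g x = g y -> x = y.
  by move=> x y e; rewrite -(hgh x) e hgh.
have [N1 hN1] := uniform hc1.
set N := Ng + N1.
have hf' := lvat_ge hf (leq_addr N1 Ng).
set f' := (fun u => f (take Ng u) ++ drop Ng u) in hf'.
set L := lvl x0 U1 N.
have hL : decomp U1 L.
  by apply: lvl_decomp => u hu; apply: (uniform_ge hN1 _ hu); apply: leq_addl.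
have hd : decomp U2 (map f' L).
  split.
    move=> y; split.
      move=> /horb [x hx <-]; have [v hv hcv] := (hL.1 x).1 hx.
      exists (f' v); first exact: map_f.
      rewrite (cyl_decomp hcv) (lvl_size hv) hf'; [exact: cyl_self | exact: lvl_size hv].
    move=> [v' /mapP [u hu ->] hc]; apply/horb.
    exists (cat_inf u (sh (size (f' u)) y)).
      by apply/(hL.1 _).2; exists u => //; exact: cyl_self.
    by rewrite hf' ?(lvl_size hu) // -cyl_decomp.
  move=> i j /andP [hij]; rewrite size_map => hj y [].
  have hi : i < size L by apply: ltn_trans hj.
  rewrite !(nth_map [::]) // => ci cj.
  have ei := cyl_decomp ci; have ej := cyl_decomp cj.
  rewrite -hf' in ei; last by apply: lvl_size; apply: mem_nth.
  rewrite -hf' in ej; last by apply: lvl_size; apply: mem_nth.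
  have := ginj _ _ (etrans (esym ei) ej) => /cat_inf_inj.
  rewrite !(lvl_size (mem_nth _ hi)) !(lvl_size (mem_nth _ hj)) => /(_ erefl) [e _].
  move: e => /eqP; rewrite nth_uniq // ?(ltn_eqF hij) //.
  by apply: filter_uniq; apply: uniq_W.
rewrite (decomp_mod x0 hd1 hL) (decomp_mod x0 hd2 hd) size_map //.
Qed.

End OneThree.


Section Swap.
Variable X : finType.
Variable x0 : X.
Local Notation pt := (pt X).
Implicit Types (p q r u v : seq X) (x : pt).

Definition sdisj p q := forall x, ~ (cyl p x /\ cyl q x).

Lemma sdisj_sym p q : sdisj p q -> sdisj q p.
Proof. by move=> h x [a b]; apply: (h x). Qed.

Lemma sdisj_ext p q p' q' : prefix p p' -> prefix q q' -> sdisj p q -> sdisj p' q'.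
Proof. by move=> h1 h2 h x [a b]; apply: (h x); split; apply: cyl_ext; eauto. Qed.

Lemma pos_disj p q i : i < size p -> i < size q -> nth x0 p i != nth x0 q i -> sdisj p q.
Proof.
move=> hp hq hne x [cp cq]; move: hne.
by rewrite -(cyl_nth _ cp hp) -(cyl_nth _ cq hq) eqxx.
Qed.

Definition swap p q x : pt :=
  if asb (cyl p x) then cat_inf q (sh (size p) x)
  else if asb (cyl q x) then cat_inf p (sh (size q) x) else x.

Variables (p q : seq X).
Hypothesis hpq : sdisj p q.

Lemma asbT (P : Prop) : P -> asb P = true.
Proof. by rewrite /asb; case: excluded_middle_informative. Qed.
Lemma asbF (P : Prop) : ~ P -> asb P = false.
Proof. by rewrite /asb; case: excluded_middle_informative. Qed.

Lemma swap_p w : swap p q (cat_inf p w) = cat_inf q w.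
Proof. by rewrite /swap asbT ?sh_cat_inf //; exact: cyl_self. Qed.

Lemma swap_q w : swap p q (cat_inf q w) = cat_inf p w.
Proof.
rewrite /swap asbF; last by move=> h; exact: (hpq (conj h (cyl_self q w))).
by rewrite asbT ?sh_cat_inf //; exact: cyl_self.
Qed.

Lemma swap_o x : ~ cyl p x -> ~ cyl q x -> swap p q x = x.
Proof. by move=> h1 h2; rewrite /swap !asbF. Qed.

Lemma swap_inv x : swap p q (swap p q x) = x.
Proof.
case: (classic (cyl p x)) => h1.
  by rewrite (cyl_decomp h1) swap_p swap_q.
case: (classic (cyl q x)) => h2.
  by rewrite (cyl_decomp h2) swap_q swap_p.
by rewrite !swap_o.
Qed.

Lemma swap_LV : LV (swap p q).
Proof.
exists (size p + size q).
exists (fun u => if prefix p u then q ++ drop (size p) u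
                 else if prefix q u then p ++ drop (size q) u else u).
move=> u hu w.
case: ifP => h1.
  move: h1; rewrite prefixE => /eqP h1.
  by rewrite -{1}(cat_take_drop (size p) u) h1 !cat_inf_cat swap_p.
case: ifP => h2.
  move: h2; rewrite prefixE => /eqP h2.
  by rewrite -{1}(cat_take_drop (size q) u) h2 !cat_inf_cat swap_q.
apply: swap_o.
  by move/cyl_cat_inf; rewrite hu leq_addr h1 => /(_ erefl).
by move/cyl_cat_inf; rewrite hu leq_addl h2 => /(_ erefl).
Qed.

Lemma swap_inV : inV (swap p q).
Proof. exact: (LV_inV x0 swap_inv swap_inv swap_LV swap_LV). Qed.

End Swap.


Section Orbit.
Variable X : finType.
Variable x0 : X.
Local Notation pt := (pt X).
Implicit Types (p q r u v : seq X) (x : pt) (S : subset_pt X).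

Definition R S S' := same_orbit (@inVcomm X) S S'.

Lemma inVcomm_comp g1 g2 : inVcomm g1 -> inVcomm g2 -> inVcomm (fun x => g1 (g2 x)).
Proof.
move=> h1; elim=> [|g a a' b b' _ IH ha hb a1 a2 b1 b2] //.
exact: (inVcomm_mul IH ha hb a1 a2 b1 b2).
Qed.

Lemma inVcomm_inv g : inVcomm g ->
  exists g', [/\ inVcomm g', (forall x, g' (g x) = x) & (forall x, g (g' x) = x)].
Proof.
elim=> [|g0 a a' b b' _ [g' [hg' e1 e2]] ha hb a1 a2 b1 b2].
  by exists (fun x => x); split => //; exact: inVcomm_id.
exists (fun x => b' (a' (b (a (g' x))))); split.
- apply: (inVcomm_comp (g1 := fun x => b' (a' (b (a x))))) => //.
  exact (inVcomm_mul (inVcomm_id X) hb ha b1 b2 a1 a2).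
- by move=> x; rewrite e1 a2 b2 a1 b1.
- by move=> x; rewrite b2 a2 b1 a1 e2.
Qed.

Lemma R_refl S : R S S.
Proof. by exists (fun x => x); split; [exact: inVcomm_id | move=> y; split => [h|[x hx <-]] //; exists y]. Qed.

Lemma R_trans S1 S2 S3 : R S1 S2 -> R S2 S3 -> R S1 S3.
Proof.
move=> [g1 [h1 o1]] [g2 [h2 o2]]; exists (fun x => g2 (g1 x)); split.
  exact: inVcomm_comp.
move=> y; split.
  by move/o2 => [x /o1 [z hz <-] <-]; exists z.
by move=> [x hx <-]; apply/o2; exists (g1 x) => //; apply/o1; exists x.
Qed.

Lemma R_sym S1 S2 : R S1 S2 -> R S2 S1.
Proof.
move=> [g [hg o]]; have [g' [hg' e1 e2]] := inVcomm_inv hg.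
exists g'; split => // y; split.
  by move=> hy; exists (g y); [apply/o; exists y | rewrite e1].
move=> [x /o [z hz <-] <-]; by rewrite e1.
Qed.

Lemma R_extr S S' S'' : (forall x, S' x <-> S'' x) -> R S S' -> R S S''.
Proof.
move=> he [g [hg o]]; exists g; split => // y; rewrite -he; exact: o.
Qed.

Lemma R_extl S S0 S' : (forall x, S x <-> S0 x) -> R S S' -> R S0 S'.
Proof.
move=> he h; apply: R_sym; apply: (R_extr he); exact: R_sym.
Qed.

Lemma R_bij g g' S S' : inVcomm g -> (forall y, g (g' y) = y) ->
  (forall x, S' (g x) <-> S x) -> R S S'.
Proof.
move=> hg e he; exists g; split => // y; split.
  by move=> hy; exists (g' y) => //; apply/he; rewrite e.
by move=> [x hx <-]; apply/he.
Qed.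

Definition tau p q r x := swap p q (swap p r (swap p q (swap p r x))).

Variables (p q r : seq X).
Hypotheses (hpq : sdisj p q) (hpr : sdisj p r) (hqr : sdisj q r).

Lemma nin a b x : sdisj a b -> cyl a x -> ~ cyl b x.
Proof. by move=> h ha hb; exact: (h x (conj ha hb)). Qed.

Lemma tau_comm : inVcomm (tau p q r).
Proof.
exact: (inVcomm_mul (inVcomm_id X) (swap_inV x0 hpq) (swap_inV x0 hpr)
  (swap_inv hpq) (swap_inv hpq) (swap_inv hpr) (swap_inv hpr)).
Qed.

Lemma tau_surj y : tau p q r (swap p r (swap p q (swap p r (swap p q y)))) = y.
Proof. by rewrite /tau !(swap_inv hpq, swap_inv hpr). Qed.

Lemma tau_p w : tau p q r (cat_inf p w) = cat_inf q w.
Proof.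
have cr := cyl_self r w.
rewrite /tau swap_p (@swap_o _ p q (cat_inf r w)) ?(swap_q hpr) ?swap_p //.
  exact: (nin (sdisj_sym hpr)).
exact: (nin (sdisj_sym hqr)).
Qed.

Lemma tau_q w : tau p q r (cat_inf q w) = cat_inf r w.
Proof.
have cq := cyl_self q w; have cr := cyl_self r w.
rewrite /tau (@swap_o _ p r (cat_inf q w)) ?(swap_q hpq) ?swap_p ?(@swap_o _ p q (cat_inf r w)) //.
- exact: (nin (sdisj_sym hpr)).
- exact: (nin (sdisj_sym hqr)).
- exact: (nin (sdisj_sym hpq)).
- exact: (nin hqr).
Qed.

Lemma tau_r w : tau p q r (cat_inf r w) = cat_inf p w.
Proof.
have cq := cyl_self q w.
rewrite /tau (swap_q hpr) swap_p (@swap_o _ p r (cat_inf q w)) ?(swap_q hpq) //.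
- exact: (nin (sdisj_sym hpq)).
- exact: (nin hqr).
Qed.

Lemma tau_o x : ~ cyl p x -> ~ cyl q x -> ~ cyl r x -> tau p q r x = x.
Proof. by move=> h1 h2 h3; rewrite /tau !(@swap_o _ p r) // !(@swap_o _ p q). Qed.

End Orbit.


Section Move.
Variable X : finType.
Variable x0 : X.
Local Notation pt := (pt X).

Lemma move_lemma (k : nat) (P Q : nat -> seq X) (r : seq X) (U : subset_pt X) :
  (forall x, U x <-> exists j, j < k /\ cyl (P j) x) ->
  (forall j j', j < k -> j' < k -> j <> j' -> sdisj (P j) (P j')) ->
  (forall j j', j < k -> j' < k -> j <> j' -> sdisj (Q j) (Q j')) ->
  (forall j j', j < k -> j' < k -> sdisj (P j) (Q j')) ->
  (forall j, j < k -> sdisj (P j) r) ->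
  (forall j, j < k -> sdisj (Q j) r) ->
  R U (fun x => exists j, j < k /\ cyl (Q j) x).
Proof.
move=> hU hPP hQQ hPQ hPr hQr.
have ct : forall a b (y : pt), sdisj a b -> cyl a y -> cyl b y -> False.
  by move=> a b y h ha hb; exact: (h y (conj ha hb)).
pose S i := fun x : pt => (exists j, j < i /\ cyl (Q j) x) \/
                          (exists j, i <= j < k /\ cyl (P j) x).
have H0 : R U (S 0).
  apply: (R_extr _ (R_refl U)) => x; rewrite hU; split.
    by move=> h; right.
  by case=> [[j []]|] //.
have step : forall i, i < k -> R (S i) (S i.+1).
  move=> i hi.
  have h1 := hPQ i i hi hi; have h2 := hPr i hi; have h3 := hQr i hi.
  apply: (R_bij (tau_comm x0 h1 h2) (tau_surj h1 h2)) => x.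
  case: (classic (cyl (P i) x)) => cA.
    rewrite (cyl_decomp cA) (tau_p h2 h3); split=> _.
      by right; exists i; rewrite leqnn hi; split => //; exact: cyl_self.
    by left; exists i; split => //; exact: cyl_self.
  case: (classic (cyl (Q i) x)) => cB.
    rewrite (cyl_decomp cB) (tau_q h1 h2 h3); split.
      case=> [[j [hj c]]|[j [/andP [hj hj'] c]]]; exfalso.
        by apply: (ct _ _ _ (hQr j (leq_trans hj hi)) c); exact: cyl_self.
      by apply: (ct _ _ _ (hPr j hj') c); exact: cyl_self.
    rewrite -(cyl_decomp cB).
    case=> [[j [hj c]]|[j [/andP [hj hj'] c]]]; exfalso.
      apply: (ct _ _ _ (hQQ j i (ltn_trans hj hi) hi _) c cB).
      by move=> e; rewrite e ltnn in hj.
    exact: (ct _ _ _ (hPQ j i hj' hi) c cB).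
  case: (classic (cyl r x)) => cC.
    rewrite (cyl_decomp cC) (tau_r h1 h2 h3); split.
      case=> [[j [hj c]]|[j [/andP [hj hj'] c]]]; exfalso.
        by apply: (ct _ _ _ (hPQ i j hi (leq_trans hj hi)) _ c); exact: cyl_self.
      apply: (ct _ _ _ (hPP j i hj' hi _) c); last exact: cyl_self.
      by move=> e; rewrite e ltnn in hj.
    rewrite -(cyl_decomp cC).
    case=> [[j [hj c]]|[j [/andP [hj hj'] c]]]; exfalso.
      exact: (ct _ _ _ (hQr j (ltn_trans hj hi)) c cC).
    exact: (ct _ _ _ (hPr j hj') c cC).
  rewrite (tau_o cA cB cC); split.
    case=> [[j [hj c]]|[j [/andP [hj hj'] c]]].
      left; exists j; split => //; move: hj; rewrite ltnS leq_eqVlt => /orP [/eqP e|//].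
      by rewrite e in c.
    by right; exists j; rewrite hj' (ltnW hj).
  case=> [[j [hj c]]|[j [/andP [hj hj'] c]]].
    by left; exists j; split => //; apply: ltnW.
  right; exists j; rewrite hj' andbT; split => //.
  move: hj; rewrite leq_eqVlt => /orP [/eqP e|//].
  by rewrite -e in c.
have Hk : forall i, i <= k -> R U (S i).
  elim=> [|i IH] hi //; apply: R_trans (IH (ltnW hi)) (step i hi).
apply: (R_extr _ (Hk k (leqnn k))) => x; split.
  by case=> // [[j [/andP [hj hj'] _]]]; rewrite leqNgt hj' in hj.
by move=> h; left.
Qed.

End Move.


Section Std.
Variable X : finType.
Variables (a b : X).
Hypothesis hab : a != b.
Local Notation pt := (pt X).
Implicit Types (c u v : seq X).

Definition Qw c j := c ++ nseq j a ++ [:: b].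
Definition T c k : subset_pt X := fun x => exists j, j < k /\ cyl (Qw c j) x.

Lemma size_Qw c j : size (Qw c j) = size c + j + 1.
Proof. by rewrite /Qw !size_cat size_nseq addnA. Qed.

Lemma nth_Qw_self c j : nth a (Qw c j) (size c + j) = b.
Proof.
by rewrite /Qw nth_cat ltnNge leq_addr /= addKn nth_cat size_nseq ltnn subnn.
Qed.

Lemma nth_ca c k j : j < k -> nth a (c ++ nseq k a) (size c + j) = a.
Proof.
by move=> h; rewrite nth_cat ltnNge leq_addr /= addKn nth_nseq h.
Qed.

Lemma nth_Qw_lt c j j' : j < j' -> nth a (Qw c j') (size c + j) = a.
Proof.
move=> h; rewrite /Qw nth_cat ltnNge leq_addr /= addKn nth_cat size_nseq h.
by rewrite nth_nseq h.
Qed.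

Lemma Qw_disj_lt c j j' : j < j' -> sdisj (Qw c j) (Qw c j').
Proof.
move=> h; apply: (@pos_disj _ a _ _ (size c + j)).
- by rewrite size_Qw addn1.
- by rewrite size_Qw addn1 ltnS leq_add2l ltnW.
- by rewrite nth_Qw_self nth_Qw_lt // eq_sym.
Qed.

Lemma Qw_disj c j j' : j <> j' -> sdisj (Qw c j) (Qw c j').
Proof.
move=> h; case: (ltngtP j j') => [l|l|e]; first exact: Qw_disj_lt.
  by apply: sdisj_sym; exact: Qw_disj_lt.
by rewrite e in h.
Qed.

Lemma Qw_r c j k : j < k -> sdisj (Qw c j) (c ++ nseq k a).
Proof.
move=> h; apply: (@pos_disj _ a _ _ (size c + j)).
- by rewrite size_Qw addn1.
- by rewrite size_cat size_nseq ltn_add2l.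
- by rewrite nth_Qw_self nth_ca // eq_sym.
Qed.

Lemma A_gen (P : nat -> seq X) k (U : subset_pt X) c :
  (forall x, U x <-> exists j, j < k /\ cyl (P j) x) ->
  (forall j j', j < k -> j' < k -> j <> j' -> sdisj (P j) (P j')) ->
  (forall j, j < k -> sdisj (P j) c) ->
  R U (T c k).
Proof.
move=> hU hPP hPc; apply: (move_lemma a (Q := Qw c) (r := c ++ nseq k a) hU hPP).
- by move=> j j' _ _; exact: Qw_disj.
- move=> j j' hj _; apply: (sdisj_ext _ _ (hPc j hj)); first by rewrite prefixE take_size.
  exact: prefix_prefix.
- move=> j hj; apply: (sdisj_ext _ _ (hPc j hj)); first by rewrite prefixE take_size.
  exact: prefix_prefix.
- by move=> j hj; exact: Qw_r.
Qed.

Lemma A_decomp (U : subset_pt X) vs c : decomp U vs -> (forall x, cyl c x -> ~ U x) ->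
  R U (T c (size vs)).
Proof.
move=> [hU hD] hc; apply: (A_gen (P := fun j => nth [::] vs j)).
- move=> x; rewrite hU; split.
    by move=> [v /(nthP [::]) [j hj <-] hcv]; exists j.
  by move=> [j [hj hcj]]; exists (nth [::] vs j) => //; exact: mem_nth.
- move=> j j' hj hj' hne x; case: (ltngtP j j') => [l|l|e].
  + by apply: hD; rewrite l.
  + by move=> [h1 h2]; apply: (hD j' j _ x); rewrite ?l //.
  + by rewrite e in hne.
- move=> j hj x [h1 h2]; apply: (hc x h2); apply/hU.
  by exists (nth [::] vs j) => //; exact: mem_nth.
Qed.

Lemma T_disj c c' k : sdisj c c' -> R (T c k) (T c' k).
Proof.
move=> h; apply: (A_gen (P := Qw c)) => //.
- by move=> j j' _ _; exact: Qw_disj.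
- move=> j _; apply: (sdisj_ext _ _ h); first exact: prefix_prefix.
  by rewrite prefixE take_size.
Qed.

Lemma B_lemma c c' k : c != [::] -> c' != [::] -> R (T c k) (T c' k).
Proof.
case: c => [|h t] // _; case: c' => [|h' t'] // _.
case: (eqVneq h h') => [<-|hne].
  pose e := if h == a then b else a.
  have he : e != h by rewrite /e; case: (eqVneq h a) => [->|hne]; rewrite eq_sym.
  have d1 : sdisj (h :: t) [:: e].
    by apply: (@pos_disj _ a _ _ 0) => //=; rewrite eq_sym.
  have d2 : sdisj [:: e] (h :: t').
    by apply: (@pos_disj _ a _ _ 0) => //=.
  exact: R_trans (T_disj k d1) (T_disj k d2).
by apply: T_disj; apply: (@pos_disj _ a _ _ 0).
Qed.

End Std.


Section Refine.
Variable X : finType.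
Variables (a b : X).
Hypothesis hab : a != b.
Local Notation pt := (pt X).
Local Notation Qw := (Qw a b).
Local Notation T := (T a b).
Implicit Types (c u v : seq X).

Lemma cyl_rcons s e (x : pt) : cyl s x -> x (size s) = e -> cyl (rcons s e) x.
Proof. by rewrite /Defs.cyl size_rcons mkseqS => -> ->. Qed.

Lemma C_lemma c k : 0 < k -> R (T c k) (T (c ++ nseq k a) (k.-1 + #|X|)).
Proof.
move=> hk.
set K := k.-1.
have hK : K < k by rewrite /K prednK.
pose e t := nth a (enum X) t.
pose P j := if j < K then Qw c j else rcons (Qw c K) (e (j - K)).
have sQK : size (Qw c K) = size c + k by rewrite size_Qw -addnA addn1 /K prednK.
have nP1 : forall j i, i < K -> i < j -> nth a (P j) (size c + i) = a.
  move=> j i hi hij; rewrite /P; case: ifP => hj; first exact: nth_Qw_lt.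
  by rewrite nth_rcons sQK ltn_add2l (ltn_trans hi hK) nth_Qw_lt.
have nP2 : forall j, nth a (P j) (size c + minn j K) = b.
  move=> j; rewrite /P; case: ifP => hj.
    by rewrite (minn_idPl (ltnW hj)) nth_Qw_self.
  rewrite (minn_idPr _); last by rewrite leqNgt hj.
  by rewrite nth_rcons sQK ltn_add2l hK nth_Qw_self.
have sP : forall j, size c + minn j K < size (P j).
  move=> j; rewrite /P; case: ifP => hj.
    by rewrite (minn_idPl (ltnW hj)) size_Qw addn1.
  rewrite size_rcons sQK ltnS leq_add2l; exact: leq_trans (geq_minr _ _) (ltnW hK).
have nP3 : forall j, K <= j -> nth a (P j) (size c + k) = e (j - K).
  move=> j hj; rewrite /P ifF; last by apply/negbTE; rewrite -leqNgt.
  by rewrite nth_rcons sQK ltnn eqxx.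
have sP3 : forall j, K <= j -> size c + k < size (P j).
  move=> j hj; rewrite /P ifF; last by apply/negbTE; rewrite -leqNgt.
  by rewrite size_rcons sQK.
apply: (A_gen hab (P := P)).
- move=> x; split.
    move=> [j [hj cj]].
    case: (ltnP j K) => hjK.
      by exists j; split; [apply: ltn_addr | rewrite /P hjK].
    have ej : j = K.
      have hkK : k = K.+1 by rewrite /K prednK.
      by move: hj; rewrite hkK ltnS => hj'; apply/eqP; rewrite eqn_leq hj' hjK.
    rewrite ej in cj.
    set t := index (x (size (Qw c K))) (enum X).
    have ht : t < #|X| by rewrite cardE index_mem mem_enum.
    exists (K + t); split; first by rewrite ltn_add2l.
    rewrite /P ltnNge leq_addr /= addKn; apply: cyl_rcons => //.
    by rewrite /e /t nth_index // mem_enum.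
  move=> [j [hj cj]]; move: cj; rewrite /P; case: ifP => hjK cj.
    by exists j; split => //; apply: ltn_trans hjK hK.
  exists K; split => //; apply: cyl_ext cj; rewrite -cats1; exact: prefix_prefix.
- have lt : forall j j', j < j' -> j' < K + #|X| -> sdisj (P j) (P j').
    move=> j j' hjj' hj'.
    case: (ltnP j K) => hjK.
      apply: (@pos_disj _ a _ _ (size c + j)).
      + by have := sP j; rewrite (minn_idPl (ltnW hjK)).
      + apply: leq_ltn_trans (sP j'); rewrite leq_add2l leq_min (ltnW hjj') ltnW //.
      + by have := nP2 j; rewrite (minn_idPl (ltnW hjK)) => ->; rewrite nP1 // eq_sym.
    have hj'K : K <= j' by apply: leq_trans hjK (ltnW hjj').
    apply: (@pos_disj _ a _ _ (size c + k)); rewrite ?sP3 // !nP3 //.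
    rewrite /e nth_uniq ?enum_uniq // -?cardE.
    + by rewrite eqn_sub2rE // neq_ltn hjj'.
    + by rewrite ltn_subLR // (ltn_trans hjj' hj').
    + by rewrite ltn_subLR.
  move=> j j' hj hj' hne; case: (ltngtP j j') => [l|l|eq].
  + exact: lt.
  + by apply: sdisj_sym; apply: lt.
  + by rewrite eq in hne.
- move=> j hj; apply: (@pos_disj _ a _ _ (size c + minn j K)).
  + exact: sP.
  + by rewrite size_cat size_nseq ltn_add2l; apply: leq_ltn_trans (geq_minr _ _) hK.
  + rewrite nP2 nth_ca; first by rewrite eq_sym.
    exact: leq_ltn_trans (geq_minr _ _) hK.
Qed.

End Refine.


Section Final.
Variable X : finType.
Variables (a b : X).
Hypothesis hab : a != b.
Local Notation pt := (pt X).
Local Notation T := (T a b).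

Lemma step_d c k : c != [::] -> 0 < k -> R (T c k) (T c (k + #|X|.-1)).
Proof.
move=> hc hk.
have hX : 0 < #|X| by apply/card_gt0P; exists a.
have -> : k + #|X|.-1 = k.-1 + #|X|.
  by rewrite -{1}(prednK hk) -{2}(prednK hX) addSnnS.
apply: R_trans (C_lemma hab c hk) (B_lemma hab _ _ _) => //.
by case: c hc.
Qed.

Lemma iter_d m c k : c != [::] -> 0 < k -> R (T c k) (T c (k + m * #|X|.-1)).
Proof.
move=> hc hk; elim: m => [|m IH]; first by rewrite mul0n addn0; exact: R_refl.
apply: R_trans IH _; rewrite mulSnr addnA.
apply: step_d => //; exact: leq_trans hk (leq_addr _ _).
Qed.

Lemma get_c (U : subset_pt X) : is_clopen U -> nonempty_proper U ->
  exists c, c != [::] /\ forall y, cyl c y -> ~ U y.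
Proof.
move=> [_ hC] [[y hy] [x hx]]; have [n hn] := hC x hx.
exists (mkseq x n); split.
  case: n hn => [|n] // hn; exfalso; exact: (hn y erefl hy).
by move=> z; rewrite /Defs.cyl size_mkseq => /hn.
Qed.

Lemma size_pos (U : subset_pt X) vs : decomp U vs -> (exists x, U x) -> 0 < size vs.
Proof.
by move=> [hU _] [x /hU [v hv _]]; move: hv; case: (vs).
Qed.

Lemma three_two_le (U1 U2 : subset_pt X) vs1 vs2 :
  is_clopen U1 -> is_clopen U2 -> nonempty_proper U1 -> nonempty_proper U2 ->
  decomp U1 vs1 -> decomp U2 vs2 -> size vs1 <= size vs2 ->
  size vs1 = size vs2 %[mod #|X|.-1] -> R U1 U2.
Proof.
move=> hc1 hc2 hn1 hn2 hd1 hd2 hle hm.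
have [c1 [hc1' hcc1]] := get_c hc1 hn1.
have [c2 [hc2' hcc2]] := get_c hc2 hn2.
have r1 := A_decomp hab hd1 hcc1.
have r2 := R_sym (A_decomp hab hd2 hcc2).
have hk1 := size_pos hd1 hn1.1.
have hdv : #|X|.-1 %| size vs2 - size vs1.
  by rewrite -eqn_mod_dvd // hm.
have e : size vs2 = size vs1 + (size vs2 - size vs1) %/ #|X|.-1 * #|X|.-1.
  by rewrite divnK // subnKC.
have r3 := iter_d ((size vs2 - size vs1) %/ #|X|.-1) hc1' hk1.
rewrite -e in r3.
exact: R_trans (R_trans r1 r3) (R_trans (B_lemma hab _ hc1' hc2') r2).
Qed.

Lemma three_two (U1 U2 : subset_pt X) vs1 vs2 :
  is_clopen U1 -> is_clopen U2 -> nonempty_proper U1 -> nonempty_proper U2 ->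
  decomp U1 vs1 -> decomp U2 vs2 ->
  size vs1 = size vs2 %[mod #|X|.-1] -> R U1 U2.
Proof.
move=> hc1 hc2 hn1 hn2 hd1 hd2 hm.
case: (leqP (size vs1) (size vs2)) => hle.
  exact: three_two_le hd1 hd2 hle hm.
by apply: R_sym; apply: three_two_le hd2 hd1 (ltnW hle) (esym hm).
Qed.

End Final.

Theorem proposition4p5 (X : finType) (hX : 2 <= #|X|) :
  (forall U : subset_pt X, is_clopen U -> exists vs, decomp U vs) /\
  (forall (U : subset_pt X) (vs1 vs2 : seq (seq X)),
      is_clopen U -> decomp U vs1 -> decomp U vs2 ->
      size vs1 = size vs2 %[mod #|X|.-1]) /\
  (forall (U1 U2 : subset_pt X) (vs1 vs2 : seq (seq X)),
      is_clopen U1 -> is_clopen U2 ->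
      nonempty_proper U1 -> nonempty_proper U2 ->
      decomp U1 vs1 -> decomp U2 vs2 ->
      (same_orbit (@inV X) U1 U2 <-> same_orbit (@inVcomm X) U1 U2) /\
      (same_orbit (@inVcomm X) U1 U2 <->
         size vs1 = size vs2 %[mod #|X|.-1])).
Proof.
have [a [b hab]] : exists a b : X, a != b.
  move: hX; rewrite cardE; case E: (enum X) => [|a [|b s]] //= _.
  exists a, b; have := enum_uniq X; rewrite E /= in_cons negb_or.
  by case/andP => /andP [].
split.
  move=> U hU; have [N hN] := uniform hU.
  by exists (lvl a U N); exact: lvl_decomp.
split.
  by move=> U vs1 vs2 _; exact: decomp_mod.
move=> U1 U2 vs1 vs2 hc1 hc2 hn1 hn2 hd1 hd2.
have h13 : same_orbit (@inV X) U1 U2 -> size vs1 = size vs2 %[mod #|X|.-1].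
  by move=> h; apply: (one_three a hc1 hd1 hd2 h).
have h32 : size vs1 = size vs2 %[mod #|X|.-1] -> same_orbit (@inVcomm X) U1 U2.
  move=> h; exact (three_two hab hc1 hc2 hn1 hn2 hd1 hd2 h).
have h21 : same_orbit (@inVcomm X) U1 U2 -> same_orbit (@inV X) U1 U2.
  by move=> [g [hg o]]; exists g; split => //; exact: (inVcomm_inV a hg).
split; split; auto.
Qed.
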